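(* Let $k$ be a kernel on $\mathcal{X}$, $\sigma>0$, $f\in\mathcal{H}_k$, $g\in\mathcal{H}_{\sigma^2\delta}$, $h=f+g$. Let $x_1,\dots,x_t\in\mathcal{X}$ be pairwise distinct with observations $y_i=h(x_i)$, and let $\widehat x_1,\dots,\widehat x_L\in\mathcal{X}\setminus\{x_1,\dots,x_t\}$. Then $$\Big|\sum_{i=1}^L\widehat m_t(\widehat x_i)-\sum_{i=1}^L f(\widehat x_i)\Big|\le\|h\|_{\mathcal{H}_{k^\sigma}}\sqrt{\mathbf 1^T\mathbf{A}\mathbf 1+L^2\sigma^2}+L\|g\|_{\mathcal{H}_{\sigma^2\delta}}\sigma,$$ where $\mathbf{A}_{ij}=k(\widehat x_i,\widehat x_j)-\mathbf{k}_t(\widehat x_i)^T(\mathbf{K}_t+\sigma^2I)^{-1}\mathbf{k}_t(\widehat x_j)$.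
   Context: $\delta(x,y)=1$ if $x=y$, else $0$; $k^\sigma=k+\sigma^2\delta$; $\mathcal{H}_{\sigma^2\delta}$ is the RKHS of $\sigma^2\delta$. $\mathbf{k}_t(x)=[k(x,x_i)]_{i\le t}$, $\mathbf{K}_t=[k(x_i,x_j)]_{i,j\le t}$, $\mathbf{y}_t=[y_i]_{i\le t}$, $\widehat m_t(x)=\mathbf{k}_t(x)^T(\mathbf{K}_t+\sigma^2I)^{-1}\mathbf{y}_t$; $\mathbf 1$ is the all-ones vector. *)

(* Defs.v *)
From Stdlib Require Import Reals ClassicalEpsilon FunctionalExtensionality.
From HB Require Import structures.
From mathcomp Require Import all_boot all_order all_algebra.
Set Implicit Arguments. Unset Strict Implicit. Unset Printing Implicit Defensive.
Import GRing.Theory.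

Definition R_eqb (x y : R) : bool :=
  if Req_EM_T x y then true else false.

Lemma R_eqP : Equality.axiom R_eqb.
Proof. by move=> x y; rewrite /R_eqb; case: Req_EM_T => h; constructor. Qed.

HB.instance Definition _ := hasDecEq.Build R R_eqP.

Definition R_find (P : pred R) (n : nat) : option R :=
  match excluded_middle_informative (exists x, P x) with
  | left h => Some (proj1_sig (constructive_indefinite_description _ h))
  | right _ => None
  end.

Lemma R_find_correct P n x : R_find P n = Some x -> P x.
Proof.
rewrite /R_find; case: excluded_middle_informative => // h [<-].
exact: proj2_sig (constructive_indefinite_description _ h).
Qed.

Lemma R_find_complete (P : pred R) : (exists x, P x) -> exists n, R_find P n.
Proof.
by move=> h; exists 0%N; rewrite /R_find; case: excluded_middle_informative.
Qed.

Lemma R_find_ext (P Q : pred R) : P =1 Q -> R_find P =1 R_find Q.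
Proof. by move=> /functional_extensionality ->. Qed.

HB.instance Definition _ :=
  hasChoice.Build R R_find_correct R_find_complete R_find_ext.

Lemma R_addA : associative Rplus.
Proof. by move=> x y z; rewrite Rplus_assoc. Qed.
Lemma R_addC : commutative Rplus.
Proof. exact: Rplus_comm. Qed.
Lemma R_add0 : left_id R0 Rplus.
Proof. exact: Rplus_0_l. Qed.
Lemma R_addN : left_inverse R0 Ropp Rplus.
Proof. exact: Rplus_opp_l. Qed.

HB.instance Definition _ := GRing.isZmodule.Build R R_addA R_addC R_add0 R_addN.

Lemma R_mulA : associative Rmult.
Proof. by move=> x y z; rewrite Rmult_assoc. Qed.
Lemma R_mulC : commutative Rmult.
Proof. exact: Rmult_comm. Qed.
Lemma R_mul1 : left_id R1 Rmult.
Proof. exact: Rmult_1_l. Qed.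
Lemma R_mulDl : left_distributive Rmult Rplus.
Proof. by move=> x y z; rewrite Rmult_plus_distr_r. Qed.
Lemma R_one_neq0 : R1 != R0.
Proof. by apply/eqP; exact: R1_neq_R0. Qed.

HB.instance Definition _ :=
  GRing.Zmodule_isComNzRing.Build R R_mulA R_mulC R_mul1 R_mulDl R_one_neq0.

Definition R_inv (x : R) : R := if x == R0 then R0 else Rinv x.

Lemma R_mulVf (x : R) : x != 0%R -> (R_inv x * x)%R = 1%R.
Proof.
move=> /eqP hx; rewrite /R_inv; case: eqP => // _.
exact: Rinv_l.
Qed.

Lemma R_inv0 : R_inv 0%R = 0%R.
Proof. by rewrite /R_inv eqxx. Qed.

HB.instance Definition _ := GRing.ComNzRing_isField.Build R R_mulVf R_inv0.

Local Open Scope ring_scope.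

Definition delta (X : Type) (x y : X) : R :=
  if excluded_middle_informative (x = y) then 1 else 0.

Definition is_kernel (X : Type) (k : X -> X -> R) : Prop :=
  (forall x y, k x y = k y x) /\
  (forall (n : nat) (xs : 'I_n -> X) (a : 'I_n -> R),
      Rle 0 (\sum_(i < n) \sum_(j < n) a i * a j * k (xs i) (xs j))).

Definition ksig (X : Type) (k : X -> X -> R) (sigma : R) : X -> X -> R :=
  fun x y => k x y + sigma ^+ 2 * delta x y.

Definition sdelta (X : Type) (sigma : R) : X -> X -> R :=
  fun x y => sigma ^+ 2 * delta x y.

(* Elements of the pre-Hilbert space H_0 = span{k(.,x)}: finite lists of
   (coefficient, centre) pairs  s = [(a_1,z_1);...;(a_m,z_m)]
   representing sum_i a_i k(z_i, .). *)
Definition comb_eval (X : Type) (k : X -> X -> R) (s : seq (R * X)) (x : X) : R :=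
  \sum_(p <- s) p.1 * k p.2 x.

Definition comb_sqnorm (X : Type) (k : X -> X -> R) (s : seq (R * X)) : R :=
  \sum_(p <- s) \sum_(q <- s) p.1 * q.1 * k p.2 q.2.

Definition comb_sub (X : Type) (s s' : seq (R * X)) : seq (R * X) :=
  s ++ [seq (- p.1, p.2) | p <- s'].

(* [rkhs_norm_is k f r] : f belongs to the RKHS H_k (the completion of H_0)
   and ||f||_{H_k} = r. *)
Definition rkhs_norm_is (X : Type) (k : X -> X -> R) (f : X -> R) (r : R) : Prop :=
  exists s : nat -> seq (R * X),
    (forall eps : R, Rlt 0 eps -> exists N : nat, forall n m : nat,
        (N <= n)%N -> (N <= m)%N ->
        Rlt (sqrt (comb_sqnorm k (comb_sub (s n) (s m)))) eps) /\
    (forall x : X, Un_cv (fun n => comb_eval k (s n) x) (f x)) /\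
    Un_cv (fun n => sqrt (comb_sqnorm k (s n))) r.

Definition in_rkhs (X : Type) (k : X -> X -> R) (f : X -> R) : Prop :=
  exists r : R, rkhs_norm_is k f r.

Definition Kmat (X : Type) (k : X -> X -> R) (t : nat) (xs : 'I_t -> X) : 'M[R]_t :=
  \matrix_(i, j) k (xs i) (xs j).

Definition kvec (X : Type) (k : X -> X -> R) (t : nat) (xs : 'I_t -> X) (x : X)
  : 'cV[R]_t := \col_i k x (xs i).

Definition post_mean (X : Type) (k : X -> X -> R) (sigma : R) (t : nat)
  (xs : 'I_t -> X) (y : 'cV[R]_t) (x : X) : R :=
  ((kvec k xs x)^T *m invmx (Kmat k xs + (sigma ^+ 2)%:M) *m y) ord0 ord0.

Definition post_cov (X : Type) (k : X -> X -> R) (sigma : R) (t : nat)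
  (xs : 'I_t -> X) (x x' : X) : R :=
  k x x' - ((kvec k xs x)^T *m invmx (Kmat k xs + (sigma ^+ 2)%:M) *m kvec k xs x')
             ord0 ord0.

(* Main.v *)
Require Import Defs.
From Stdlib Require Import Reals Lra FunctionalExtensionality ClassicalEpsilon.
From HB Require Import structures.
From mathcomp Require Import all_boot all_order all_algebra.
Import GRing.Theory.
Set Implicit Arguments. Unset Strict Implicit.
Local Open Scope ring_scope.

Lemma addE (x y : R) : x + y = Rplus x y. Proof. by []. Qed.
Lemma mulE (x y : R) : x * y = Rmult x y. Proof. by []. Qed.
Lemma oppE (x : R) : - x = Ropp x. Proof. by []. Qed.
Lemma zeroE : (0 : R) = R0. Proof. by []. Qed.
Lemma oneE : (1 : R) = R1. Proof. by []. Qed.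

Definition Bf (X : Type) (K : X -> X -> R) (s u : seq (R * X)) : R :=
  \sum_(p <- s) \sum_(q <- u) p.1 * q.1 * K p.2 q.2.
Definition psd (X : Type) (K : X -> X -> R) := forall s, Rle 0 (Bf K s s).
Definition symk (X : Type) (K : X -> X -> R) := forall x y, K x y = K y x.

Lemma Rle_sum (I : Type) (r : seq I) (F G : I -> R) :
  (forall i, Rle (F i) (G i)) -> Rle (\sum_(i <- r) F i) (\sum_(i <- r) G i).
Proof.
move=> H; apply: (big_ind2 (fun a b => Rle a b)) => //.
- exact: Rle_refl.
- by move=> a b c d h1 h2; rewrite !addE; apply: Rplus_le_compat.
Qed.

Lemma Rle_sum0 (I : Type) (r : seq I) (F : I -> R) :
  (forall i, Rle 0 (F i)) -> Rle 0 (\sum_(i <- r) F i).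
Proof.
move=> H; apply: (big_ind (fun a => Rle 0 a)) => //.
- exact: Rle_refl.
- by move=> a b h1 h2; rewrite addE; apply: Rplus_le_le_0_compat.
Qed.

Lemma Rabs_sum (I : Type) (r : seq I) (F : I -> R) :
  Rle (Rabs (\sum_(i <- r) F i)) (\sum_(i <- r) Rabs (F i)).
Proof.
elim: r => [|a r IH]; first by rewrite !big_nil Rabs_R0; apply: Rle_refl.
rewrite !big_cons !addE.
apply: Rle_trans (Rabs_triang _ _) _; apply: Rplus_le_compat_l; exact: IH.
Qed.

Lemma cv_const (c : R) : Un_cv (fun _ => c) c.
Proof. by move=> e he; exists 0%N => n _; rewrite /R_dist Rminus_diag Rabs_R0. Qed.

Lemma cv_sum (I : Type) (r : seq I) (F : nat -> I -> R) (l : I -> R) :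
  (forall i, Un_cv (fun n => F n i) (l i)) ->
  Un_cv (fun n => \sum_(i <- r) F n i) (\sum_(i <- r) l i).
Proof.
move=> H; elim: r => [|a r IH].
  rewrite big_nil.
  have -> : (fun n => \sum_(i <- [::]) F n i) = fun _ => R0.
    by apply: functional_extensionality => n; rewrite big_nil.
  by move=> e he; exists 0%N => n _; rewrite /R_dist Rminus_diag Rabs_R0.
rewrite big_cons.
have -> : (fun n => \sum_(i <- a :: r) F n i) =
          fun n => Rplus (F n a) (\sum_(i <- r) F n i).
  by apply: functional_extensionality => n; rewrite big_cons.
exact: CV_plus.
Qed.

Lemma psd_of_ord (X : Type) (K : X -> X -> R) :
  (forall (n : nat) (xs : 'I_n -> X) (a : 'I_n -> R),
      Rle 0 (\sum_(i < n) \sum_(j < n) a i * a j * K (xs i) (xs j))) -> psd K.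
Proof.
move=> H s; case: s => [|p s']; first by rewrite /Bf big_nil; apply: Rle_refl.
set s := p :: s'.
rewrite /Bf (big_nth p) big_mkord.
under eq_bigr do rewrite (big_nth p) big_mkord.
exact: (H (size s) (fun i => (nth p s i).2) (fun i => (nth p s i).1)).
Qed.


Local Open Scope R_scope.
Lemma quad_disc (a b c : R) : 0 <= c ->
  (forall l, 0 <= a + b * l + b * l + c * l * l) -> b * b <= a * c.
Proof.
move=> hc H'.
have ha := H' 0.
case: (Rle_lt_or_eq_dec _ _ hc) => hc'.
- have h1 := H' (- b / c).
  have e : a + b * (- b / c) + b * (- b / c) + c * (- b / c) * (- b / c) = (a * c - b * b) / c.
    by field; lra.
  rewrite e in h1.
  have : 0 <= a * c - b * b.
    have := Rmult_le_compat_r c _ _ (Rlt_le _ _ hc') h1.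
    by rewrite Rmult_0_l /Rdiv Rmult_assoc Rinv_l ?Rmult_1_r; lra.
  lra.
- rewrite -hc' in H'.
  case: (Req_dec b 0) => hb; first by rewrite hb -hc'; lra.
  have := H' (- (a + 1) / (b + b)).
  have e : a + b * (- (a + 1) / (b + b)) + b * (- (a + 1) / (b + b)) + 0 * (- (a + 1) / (b + b)) * (- (a + 1) / (b + b)) = -1.
    by field; lra.
  by rewrite e; lra.
Qed.
Local Close Scope R_scope.
From mathcomp Require Import ring.

Definition scl (X : Type) (l : R) (s : seq (R * X)) := [seq (l * p.1, p.2) | p <- s].

Lemma Bf_catl X K (s1 s2 u : seq (R * X)) : Bf K (s1 ++ s2) u = Bf K s1 u + Bf K s2 u.
Proof. by rewrite /Bf big_cat. Qed.
Lemma Bf_catr X K (s u1 u2 : seq (R * X)) : Bf K s (u1 ++ u2) = Bf K s u1 + Bf K s u2.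
Proof. by rewrite /Bf -big_split; apply: eq_bigr => p _; rewrite big_cat. Qed.
Lemma Bf_scll X K l (s u : seq (R * X)) : Bf K (scl l s) u = l * Bf K s u.
Proof.
rewrite /Bf big_map mulr_sumr; apply: eq_bigr => p _; rewrite mulr_sumr.
by apply: eq_bigr => q _ /=; ring.
Qed.
Lemma Bf_sclr X K l (s u : seq (R * X)) : Bf K s (scl l u) = l * Bf K s u.
Proof.
rewrite /Bf mulr_sumr; apply: eq_bigr => p _; rewrite big_map mulr_sumr.
by apply: eq_bigr => q _ /=; ring.
Qed.
Lemma Bf_sym X K (s u : seq (R * X)) : symk K -> Bf K s u = Bf K u s.
Proof.
move=> sK; rewrite /Bf exchange_big; apply: eq_bigr => p _; apply: eq_bigr => q _.
by rewrite sK; ring.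
Qed.


Lemma CS X K (s u : seq (R * X)) : symk K -> psd K ->
  Rle (Bf K s u * Bf K s u) (Bf K s s * Bf K u u).
Proof.
move=> sK pK.
apply: quad_disc; first exact: pK.
move=> l; have := pK (s ++ scl l u).
rewrite !Bf_catl !Bf_catr !Bf_scll !Bf_sclr.
suff -> : Bf K s s + l * Bf K s u + (l * Bf K u s + l * (l * Bf K u u)) =
          Bf K s s + Bf K s u * l + Bf K s u * l + Bf K u u * l * l by [].
rewrite (Bf_sym u s sK); ring.
Qed.

Lemma abs_CS X K (s u : seq (R * X)) : symk K -> psd K ->
  Rle (Rabs (Bf K s u)) (sqrt (Bf K s s) * sqrt (Bf K u u)).
Proof.
move=> sK pK; rewrite -sqrt_mult; try exact: pK.
rewrite -sqrt_Rsqr_abs; apply: sqrt_le_1_alt.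
rewrite /Rsqr; exact: CS.
Qed.


Lemma delta_eq X (x y : X) : x = y -> delta x y = 1.
Proof. by rewrite /delta; case: excluded_middle_informative. Qed.
Lemma delta_neq X (x y : X) : x <> y -> delta x y = 0.
Proof. by rewrite /delta; case: excluded_middle_informative. Qed.
Lemma delta_sym X : symk (@delta X).
Proof.
move=> x y; case: (excluded_middle_informative (x = y)) => h.
  by rewrite !delta_eq.
by rewrite !delta_neq // => e; apply: h.
Qed.
Lemma delta1P X (x y : X) : delta x y == 1 -> x = y.
Proof.
case: (excluded_middle_informative (x = y)) => // h.
by rewrite delta_neq // eq_sym oner_eq0.
Qed.

Lemma delta_psd_ord X (n : nat) (z : 'I_n -> X) (a : 'I_n -> R) :
  Rle 0 (\sum_(i < n) \sum_(j < n) a i * a j * delta (z i) (z j)).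
Proof.
pose P (i : 'I_n) := fun l : 'I_n => delta (z l) (z i) == 1.
pose fst (i : 'I_n) := find (P i) (enum 'I_n).
have hasP i : has (P i) (enum 'I_n).
  by apply/hasP; exists i; [rewrite mem_enum | rewrite /P delta_eq].
have fst_lt i : (fst i < n)%N.
  by have := hasP i; rewrite has_find size_enum_ord.
have fstP i : z (nth i (enum 'I_n) (fst i)) = z i.
  exact: delta1P (nth_find i (hasP i)).
have key i j : delta (z i) (z j) =
    \sum_(m < n) (fst i == m)%:R * (fst j == m)%:R.
  rewrite (bigD1 (Ordinal (fst_lt i))) //= eqxx mul1r big1; last first.
    by move=> m /negP hm; rewrite eq_sym; case: eqP => // e;
       [exfalso; apply: hm; apply/eqP; apply: val_inj | rewrite mul0r].
  case: (excluded_middle_informative (z i = z j)) => h.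
    rewrite delta_eq // addr0.
    have -> : fst j = fst i.
      rewrite /fst; congr find; apply: functional_extensionality => l.
      by rewrite /P h.
    by rewrite eqxx.
  rewrite delta_neq // addr0.
  case: eqP => // e; exfalso; apply: h.
  rewrite -(fstP i) -(fstP j) -e.
  by rewrite (set_nth_default j) // size_enum_ord.
under eq_bigr do under eq_bigr do rewrite key mulr_sumr.
under eq_bigr do rewrite exchange_big.
rewrite exchange_big /=.
apply: Rle_sum0 => m.
have -> : \sum_(i < n) \sum_(j < n) a i * a j * ((fst i == m)%:R * (fst j == m)%:R) =
   (\sum_(i < n) a i * (fst i == m)%:R) * (\sum_(i < n) a i * (fst i == m)%:R).
  rewrite mulr_suml; apply: eq_bigr => i _; rewrite mulr_sumr; apply: eq_bigr => j _.
  ring.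
exact: Rle_0_sqr.
Qed.


Lemma Bf_eval X (K : X -> X -> R) s (v : seq (R * X)) :
  Bf K s v = \sum_(q <- v) q.1 * comb_eval K s q.2.
Proof.
rewrite /Bf exchange_big; apply: eq_bigr => q _; rewrite /comb_eval mulr_sumr.
by apply: eq_bigr => p _; ring.
Qed.

Lemma rkhs_bound X (K : X -> X -> R) h r (v : seq (R * X)) :
  symk K -> psd K -> rkhs_norm_is K h r ->
  Rle (Rabs (\sum_(q <- v) q.1 * h q.2)) (r * sqrt (Bf K v v)).
Proof.
move=> sK pK [s [_ [hcv ncv]]].
set c := sqrt (Bf K v v).
have cv1 : Un_cv (fun n => Bf K (s n) v) (\sum_(q <- v) q.1 * h q.2).
  have -> : (fun n => Bf K (s n) v) = fun n => \sum_(q <- v) q.1 * comb_eval K (s n) q.2.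
    by apply: functional_extensionality => n; rewrite Bf_eval.
  apply: cv_sum => q.
  exact: CV_mult (cv_const _) (hcv q.2).
have cv2 : Un_cv (fun n => Rmult (sqrt (comb_sqnorm K (s n))) c) (Rmult r c).
  exact: CV_mult ncv (cv_const _).
have bnd n : Rle (Rabs (Bf K (s n) v)) (Rmult (sqrt (comb_sqnorm K (s n))) c).
  exact: abs_CS.
apply: Rabs_le; split.
- have := Rle_cv_lim (Un := fun n => Ropp (Rmult (sqrt (comb_sqnorm K (s n))) c)) _ (CV_opp _ _ cv2) cv1.
  apply => n; have := bnd n; have := Rle_abs (Ropp (Bf K (s n) v)); rewrite Rabs_Ropp; lra.
- apply: (Rle_cv_lim _ cv1 cv2) => n.
  by apply: Rle_trans (bnd n); apply: Rle_abs.
Qed.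


Lemma sq_sum_le (n : nat) (a : 'I_n -> R) (i : 'I_n) :
  Rle (a i * a i) (\sum_(j < n) a j * a j).
Proof.
rewrite (bigD1 i) //= addE; rewrite -[X in Rle X _]Rplus_0_r.
apply: Rplus_le_compat_l; rewrite big_mkcond; apply: Rle_sum0 => j; case: (j != i) => //=.
  exact: Rle_0_sqr.
exact: Rle_refl.
Qed.

Lemma M_unit X (k : X -> X -> R) (sigma : R) t (xs : 'I_t -> X) :
  is_kernel k -> Rlt 0 sigma ->
  (Kmat k xs + (sigma ^+ 2)%:M) \in unitmx.
Proof.
move=> [_ pk] hs; rewrite unitmxE unitfE; apply/negP => /det0P [v vn0 hv].
apply/negP: vn0; rewrite negbK; apply/eqP/matrixP => a j; rewrite (ord1 a) mxE.
have e : (v *m (Kmat k xs + (sigma ^+ 2)%:M) *m v^T) ord0 ord0 = 0.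
  by rewrite hv mul0mx mxE.
have e2 : (v *m (Kmat k xs + (sigma ^+ 2)%:M) *m v^T) ord0 ord0 =
   \sum_(i < t) \sum_(l < t) v ord0 i * v ord0 l * k (xs i) (xs l)
   + sigma ^+ 2 * \sum_(i < t) v ord0 i * v ord0 i.
  rewrite mxE [X in _ = X + _]exchange_big mulr_sumr -big_split /=; apply: eq_bigr => l _.
  rewrite !mxE.
  under [X in X * _ = _]eq_bigr do rewrite !mxE.
  rewrite mulr_suml (bigD1 l) //= [X in _ = X + _](bigD1 l) //= eqxx mulr1n.
  rewrite (eq_bigr (fun i => v ord0 i * v ord0 l * k (xs i) (xs l))); last first.
    by move=> i hi; rewrite (negbTE hi) mulr0n addr0; ring.
  ring.
rewrite e2 in e.
have hQ := pk t xs (v ord0).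
have hS := sq_sum_le (v ord0) j.
have hs2 : Rlt 0 (sigma ^+ 2) by rewrite expr2 mulE; apply: Rmult_lt_0_compat.
move: e hQ hS hs2; rewrite zeroE.
set Q := \sum_(i < t) _.
set S := \sum_(i < t) _.
rewrite !addE !mulE => e hQ hS hs2.
have {}e : Rplus Q (Rmult (sigma ^+ 2) S) = R0 by exact: e.
have hS0 : Rle S 0.
  apply: (Rmult_le_reg_l (sigma ^+ 2)) => //; rewrite Rmult_0_r. lra.
change (v ord0 j = R0); apply: Rsqr_0_uniq; rewrite /Rsqr; have := Rle_0_sqr (v ord0 j); rewrite /Rsqr; lra.
Qed.


Lemma sq_ge0 (x : R) : Rle 0 (x ^+ 2).
Proof. rewrite expr2; exact: Rle_0_sqr. Qed.

Lemma psd_delta X : psd (@delta X).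
Proof. apply: psd_of_ord => n z a; exact: delta_psd_ord. Qed.

Lemma Bf_sd X (sigma : R) (s u : seq (R * X)) :
  Bf (sdelta sigma) s u = sigma ^+ 2 * Bf (@delta X) s u.
Proof.
rewrite /Bf mulr_sumr; apply: eq_bigr => p _; rewrite mulr_sumr.
by apply: eq_bigr => q _; rewrite /sdelta; ring.
Qed.

Lemma Bf_ksig X k (sigma : R) (s u : seq (R * X)) :
  Bf (ksig k sigma) s u = Bf k s u + Bf (sdelta sigma) s u.
Proof.
rewrite /Bf -big_split; apply: eq_bigr => p _; rewrite -big_split.
apply: eq_bigr => q _; rewrite /ksig /sdelta /=; ring.
Qed.

Lemma psd_sd X (sigma : R) : psd (@sdelta X sigma).
Proof. move=> s; rewrite Bf_sd mulE; apply: Rmult_le_pos; [exact: sq_ge0 | exact: psd_delta]. Qed.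

Lemma sym_sd X (sigma : R) : symk (@sdelta X sigma).
Proof. by move=> x y; rewrite /sdelta delta_sym. Qed.

Lemma psd_ksig X k (sigma : R) : is_kernel k -> psd (@ksig X k sigma).
Proof.
move=> [_ hk] s; rewrite Bf_ksig addE; apply: Rplus_le_le_0_compat.
  exact: psd_of_ord hk s.
exact: psd_sd.
Qed.

Lemma sym_ksig X k (sigma : R) : is_kernel k -> symk (@ksig X k sigma).
Proof. by move=> [hk _] x y; rewrite /ksig hk delta_sym. Qed.

Lemma g_bound X (sigma : R) (g : X -> R) r x : Rlt 0 sigma ->
  rkhs_norm_is (@sdelta X sigma) g r -> Rle (Rabs (g x)) (r * sigma).
Proof.
move=> hs hg.
have := rkhs_bound [:: (1, x)] (@sym_sd X sigma) (@psd_sd X sigma) hg.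
rewrite big_seq1 /= mul1r.
have -> : Bf (sdelta sigma) [:: (1, x)] [:: (1, x)] = sigma * sigma.
  by rewrite /Bf !big_seq1 /= /sdelta delta_eq // !mul1r mulr1 expr2.
by rewrite sqrt_square //; apply: Rlt_le.
Qed.

Unset Implicit Arguments.

Theorem mainTheorem16 (X : Type) (k : X -> X -> R) (sigma : R)
  (f g : X -> R) (t : nat) (xs : 'I_t -> X) (L : nat) (xh : 'I_L -> X)
  (norm_h norm_g : R) :
  is_kernel k ->
  Rlt 0 sigma ->
  in_rkhs k f ->
  rkhs_norm_is (@sdelta X sigma) g norm_g ->
  rkhs_norm_is (ksig k sigma) (fun x => f x + g x) norm_h ->
  injective xs ->
  (forall (i : 'I_L) (j : 'I_t), xh i <> xs j) ->
  let y := \col_(i < t) (f (xs i) + g (xs i)) in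
  Rle (Rabs (\sum_(i < L) post_mean k sigma xs y (xh i) - \sum_(i < L) f (xh i)))
      (norm_h * sqrt (\sum_(i < L) \sum_(j < L) post_cov k sigma xs (xh i) (xh j)
                      + (L%:R) ^+ 2 * sigma ^+ 2)
       + L%:R * norm_g * sigma).
Proof.
move=> hk hs _ hg hh injx hxh y.
set M := Kmat k xs + (sigma ^+ 2)%:M.
have Mu : M \in unitmx by exact: M_unit.
set b := \sum_(i < L) kvec k xs (xh i).
set rr := b^T *m invmx M.
have hrM : rr *m M = b^T by rewrite /rr mulmxKV.
have rrE : rr = b^T *m invmx M by [].
clearbody rr.
set beta := \sum_(j < t) rr ord0 j * b j ord0.
set v := [seq (GRing.one R, xh i) | i <- index_enum 'I_L] ++
         [seq (- rr ord0 j, xs j) | j <- index_enum 'I_t].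
set Ks := ksig k sigma.
have Ksxh i j : Ks (xh i) (xs j) = k (xh i) (xs j).
  by rewrite /Ks /ksig delta_neq ?mulr0 ?addr0.
have Ksxs i j : Ks (xs i) (xs j) = M i j.
  rewrite /Ks /ksig !mxE; case: (eqVneq i j) => [->|hij].
    by rewrite delta_eq // mulr1.
  by rewrite delta_neq ?mulr0 // => /injx e; move: hij; rewrite e eqxx.
have bE j : b j ord0 = \sum_(i < L) k (xh i) (xs j).
  by rewrite summxE; apply: eq_bigr => i _; rewrite mxE.
have F1 : \sum_(q <- v) q.1 * (f q.2 + g q.2) =
  \sum_(i < L) (f (xh i) + g (xh i)) - \sum_(j < t) rr ord0 j * (f (xs j) + g (xs j)).
  rewrite /v big_cat !big_map /= -sumrN; congr (_ + _).
    by apply: eq_bigr => i _; rewrite mul1r.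
  by apply: eq_bigr => j _; rewrite mulNr.
have F2 : Bf Ks v v = \sum_(i < L) \sum_(i' < L) Ks (xh i) (xh i') - beta.
  pose v1 := [seq (GRing.one R, xh i) | i <- index_enum 'I_L].
  pose v2 := [seq (- rr ord0 j, xs j) | j <- index_enum 'I_t].
  have B11 : Bf Ks v1 v1 = \sum_(i < L) \sum_(i' < L) Ks (xh i) (xh i').
    rewrite /Bf big_map; apply: eq_bigr => i _; rewrite big_map.
    by apply: eq_bigr => j _; rewrite /= !mul1r.
  have B12 : Bf Ks v1 v2 = - beta.
    rewrite /Bf big_map; under eq_bigr do rewrite big_map.
    rewrite exchange_big /beta -sumrN /=; apply: eq_bigr => j _.
    rewrite bE mulr_sumr -sumrN; apply: eq_bigr => i _.
    by rewrite /= Ksxh; ring.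
  have B22 : Bf Ks v2 v2 = beta.
    rewrite /Bf big_map; under eq_bigr do rewrite big_map.
    rewrite exchange_big /beta /=; apply: eq_bigr => j _.
    have -> : b j ord0 = (rr *m M) ord0 j.
      by rewrite hrM mxE.
    rewrite [in RHS]mxE mulr_sumr; apply: eq_bigr => i _.
    by rewrite /= Ksxs; ring.
  rewrite /v -/v1 -/v2 !Bf_catl !Bf_catr B11 B12 B22 (Bf_sym _ _ (sym_ksig sigma hk)) B12.
  ring.
have F3 : \sum_(i < L) post_mean k sigma xs y (xh i) =
          \sum_(j < t) rr ord0 j * (f (xs j) + g (xs j)).
  rewrite /post_mean -/M -summxE -!mulmx_suml -raddf_sum -/b -rrE mxE.
  by apply: eq_bigr => j _; rewrite mxE.
have F4 : \sum_(i < L) \sum_(j < L) post_cov k sigma xs (xh i) (xh j) =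
          \sum_(i < L) \sum_(j < L) k (xh i) (xh j) - beta.
  rewrite /post_cov -/M.
  under eq_bigr do rewrite sumrB.
  rewrite sumrB; congr (_ - _).
  under eq_bigr do rewrite -summxE -mulmx_sumr -/b.
  rewrite -summxE -!mulmx_suml -raddf_sum -/b -rrE mxE.
  by [].
have hphi := rkhs_bound v (sym_ksig sigma hk) (psd_ksig sigma hk) hh.
rewrite /= F1 F2 in hphi.
have hnh : Rle 0 norm_h.
  case: hh => s [_ [_ hcv]].
  apply: (Rle_cv_lim (Un := fun _ => R0) _ (cv_const R0) hcv) => n; exact: sqrt_pos.
have cnt (c : R) : \sum_(i < L) c = Rmult L%:R c.
  by rewrite sumr_const card_ord; exact: (esym (mulr_natl c L)).
have hA : Rle (Rabs (\sum_(i < L) g (xh i))) (L%:R * norm_g * sigma).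
  apply: Rle_trans (Rabs_sum _ _) _.
  rewrite Rmult_assoc -cnt; apply: Rle_sum => i; exact: g_bound.
have hD : Rle (\sum_(i < L) \sum_(i' < L) delta (xh i) (xh i')) (L%:R * L%:R).
  rewrite -cnt; apply: Rle_sum => i; rewrite -[X in Rle _ X]Rmult_1_r -cnt.
  apply: Rle_sum => j; rewrite /delta; case: excluded_middle_informative => ?.
    exact: Rle_refl.
  exact: Rle_0_1.
have hS1 : \sum_(i < L) \sum_(i' < L) Ks (xh i) (xh i') =
   \sum_(i < L) \sum_(j < L) k (xh i) (xh j) +
   sigma ^+ 2 * \sum_(i < L) \sum_(i' < L) delta (xh i) (xh i').
  rewrite mulr_sumr -big_split; apply: eq_bigr => i _.
  by rewrite mulr_sumr -big_split.
rewrite F3 F4; rewrite hS1 in hphi.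
rewrite big_split /= in hphi.
have hsq : Rle (sqrt (\sum_(i < L) \sum_(j < L) k (xh i) (xh j) +
     sigma ^+ 2 * \sum_(i < L) \sum_(i' < L) delta (xh i) (xh i') - beta))
   (sqrt (\sum_(i < L) \sum_(j < L) k (xh i) (xh j) - beta + L%:R ^+ 2 * sigma ^+ 2)).
  apply: sqrt_le_1_alt.
  have hs2 := sq_ge0 sigma.
  move: hD hs2.
  set D := \sum_(i < L) _; set Kk := \sum_(i < L) _.
  rewrite !expr2 ?addE ?mulE ?oppE => hD hs2.
  have := Rmult_le_compat_l _ _ _ hs2 hD; lra.
move: hphi hA hsq hnh.
set Fs := \sum_(i < L) f (xh i).
set Gs := \sum_(i < L) g (xh i).
set P := \sum_(j < t) _.
set s1 := sqrt _. set s2 := sqrt _.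
rewrite ?addE ?mulE ?oppE => hphi hA hsq hnh.
have := Rmult_le_compat_l _ _ _ hnh hsq.
have := Rabs_triang Gs (Ropp (Rplus (Rplus Fs Gs) (Ropp P))).
rewrite Rabs_Ropp.
have -> : Rplus Gs (Ropp (Rplus (Rplus Fs Gs) (Ropp P))) = Rplus P (Ropp Fs) by lra.
rewrite /Rminus.
lra.
Qed.
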